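(* Let $r\ge1$ and $G\subset\mathbb{Z}_2^r$ a subgroup with $1^r\in G$, $S_G$ as below. Then $\dim_{\mathbb{C}}S_G=2^{2r-\dim G}P_G(\tfrac12)$, where $P_G(t)=\sum_{k=0}^r N_k(G)t^k$ and $N_k(G)=\#\{g\in G: g \text{ has exactly } k \text{ nonzero coordinates}\}$ ($\dim G$ is the $\mathbb{Z}_2$-dimension).
   Context: For $c\in\mathbb{Z}_2^{r+r}$, $|c|_l,|c|_r$ are the numbers of ones among the first/last $r$ coordinates, $|c|=|c|_l-|c|_r$ (componentwise products of codewords), $d_\perp=1^{2r}+d$, $\mathbb{Z}_2^d=\{\alpha:d\alpha=\alpha\}$, $A^\perp=\{\beta:|\beta a|\in2\mathbb{Z}\ \forall a\in A\}$. $\Delta(g)=(g,g)$; $D_G=\Delta G$, $C_G=D_G^\perp$. $C^{\rm even}_{r,r}=\{\alpha:|\alpha|\in2\mathbb{Z}\}$ with ordered basis $(v_1,\dots,v_{2r-1})=(\Delta e_1,\dots,\Delta e_r,\tilde e_1-\tilde e_2,\dots,\tilde e_{r-1}-\tilde e_r)$, $\tilde e_i=(e_i,0)$; $\varepsilon$ bimultiplicative to $\{\pm1\}$ with $\varepsilon(v_i,v_i)=(-1)^{|v_i|/2}$, $\varepsilon(v_i,v_j)=1$ ($i<j$), $(-1)^{|v_iv_j|}$ ($i>j$). $\mathbb{C}[\hat C_G]$: basis $e_\alpha$ ($\alpha\in C_G$), $e_\alpha e_\beta=\varepsilon(\alpha,\beta)e_{\alpha+\beta}$. For $d\in\Delta\mathbb{Z}_2^r$,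 $\Delta^d=\mathbb{Z}_2^d\cap\Delta\mathbb{Z}_2^r$, with $\{e_\gamma\}_{\gamma\in\Delta^d}$ spanning a copy of the group algebra $\mathbb{C}[\Delta^d]$. For $d\in D_G$, $A_G(d)=\mathbb{C}[\hat C_G]\otimes_{\mathbb{C}[\Delta^d]}\mathbb{C}t_d$ (trivial module) and $S_G=\bigoplus_{d\in D_G}A_G(d)$. *)

(* Defs.v *)
From HB Require Import structures.
From mathcomp Require Import all_boot all_order all_algebra all_field.
Set Implicit Arguments. Unset Strict Implicit. Unset Printing Implicit Defensive.
Import Order.TTheory GRing.Theory Num.Theory.
Local Open Scope ring_scope.

(* Z_2^r as row vectors over F_2; Z_2^{r+r} as 'rV['F_2]_(r+r),
   first r coordinates = "left", last r = "right". *)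
Notation bv n := 'rV['F_2]_n.

Section Defs.
Variable r : nat.

Definition Delta (g : bv r) : bv (r + r) := row_mx g g.

Definition cmul n (a b : bv n) : bv n := \row_k (a 0 k * b 0 k).

Definition wtl (c : bv (r + r)) : nat := #|[set k : 'I_r | lsubmx c 0 k != 0]|.
Definition wtr (c : bv (r + r)) : nat := #|[set k : 'I_r | rsubmx c 0 k != 0]|.
Definition wt (c : bv (r + r)) : int := (wtl c)%:Z - (wtr c)%:Z.

Definition perp (A : {set bv (r + r)}) : {set bv (r + r)} :=
  [set b | [forall a in A, (2 %| wt (cmul b a))%Z]].

(* standard unit vector e_i of Z_2^r (0-indexed; zero if i >= r) *)
Definition eunit (i : nat) : bv r := \row_(k < r) ((k : nat) == i)%:R.
Definition etil (i : nat) : bv (r + r) := row_mx (eunit i) 0.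

(* ordered basis (v_1,...,v_{2r-1}) of C^even_{r,r}, 0-indexed:
   v_i = Delta e_i for i < r, v_{r+j} = etil_j - etil_{j+1} for j < r-1 *)
Definition vbasis_fun (i : nat) : bv (r + r) :=
  if (i < r)%N then Delta (eunit i)
  else etil (i - r)%N - etil (i - r)%N.+1.

Definition vbasis : ((r + r).-1).-tuple (bv (r + r)) :=
  [tuple vbasis_fun i | i < (r + r).-1].

Definition sgn (n : nat) : algC := (-1) ^+ n.

Definition eps_basis (i j : 'I_((r + r).-1)) : algC :=
  if i == j then sgn `|(wt (vbasis`_i) %/ 2)%Z|%N
  else if (i < j)%N then 1
  else sgn `|wt (cmul vbasis`_i vbasis`_j)|%N.

(* the bimultiplicative extension of eps_basis, via coordinates in the
   basis vbasis *)
Definition eps (a b : bv (r + r)) : algC :=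
  \prod_(i < (r + r).-1) \prod_(j < (r + r).-1)
     (if (coord vbasis i a != 0) && (coord vbasis j b != 0)
      then eps_basis i j else 1).

(* ambient space of C-valued functions on Z_2^{r+r}; e_a = indicator *)
Definition FV := {ffun bv (r + r) -> algC^o}.
Definition ebas (a : bv (r + r)) : FV := [ffun x => (x == a)%:R].

(* twisted convolution product: e_a e_b = eps(a,b) e_{a+b} *)
Definition tmul (f g : FV) : FV :=
  [ffun c => \sum_(a : bv (r + r)) \sum_(b : bv (r + r))
               (if a + b == c then eps a b * f a * g b else 0)].

Variable G : {vspace bv r}.

Definition DG : {set bv (r + r)} := [set Delta g | g : bv r & g \in G].
Definition CG : {set bv (r + r)} := perp DG.

(* underlying vector space of C[hat C_G] *)
Definition CGalg : {vspace FV} := <<[seq ebas a | a <- enum CG]>>%VS.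

(* Delta^d = Z_2^d cap Delta Z_2^r *)
Definition Deltad (d : bv (r + r)) : {set bv (r + r)} :=
  [set c | (cmul d c == c) && (c \in [set Delta h | h : bv r])].

(* A_G(d) = C[hat C_G] (x)_{C[Delta^d]} C t_d is the quotient of C[hat C_G]
   by the span of x*a - x*(counit a), x in C[hat C_G], a in C[Delta^d];
   by bilinearity this is spanned by e_a e_g - e_a. *)
Definition relsp (d : bv (r + r)) : {vspace FV} :=
  <<[seq tmul (ebas a) (ebas g) - ebas a | a <- enum CG, g <- enum (Deltad d)]>>%VS.

Definition dimA (d : bv (r + r)) : nat := (\dim CGalg - \dim (relsp d))%N.

(* S_G = (+)_{d in D_G} A_G(d) *)
Definition dimS : nat := \sum_(d in DG) dimA d.

Definition Nk (k : nat) : nat :=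
  #|[set g : bv r | (g \in G) && (#|[set i | g 0 i != 0]| == k)]|.

Definition PG_half : rat := \sum_(k < r.+1) (Nk k)%:R / 2%:R ^+ k.

End Defs.

(* Main.v *)
Require Import Defs.
From HB Require Import structures.
From mathcomp Require Import all_boot all_order all_algebra all_field.
From mathcomp Require Import zify.
Import GRing.Theory Num.Theory.
Local Open Scope ring_scope.
Set Implicit Arguments. Unset Strict Implicit. Unset Printing Implicit Defensive.

Lemma F2_cases (x : 'F_2) : x = 0 \/ x = 1.
Proof. case: x => [[|[|n]] Hn]; [left|right|]; try by apply/eqP. by []. Qed.

Lemma F2_addxx (x : 'F_2) : x + x = 0.
Proof. by case: (F2_cases x) => ->; apply/eqP. Qed.

Lemma F2_oppE (x : 'F_2) : - x = x.
Proof. by case: (F2_cases x) => ->; apply/eqP. Qed.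

Lemma F2_nat (n : nat) : (n%:R : 'F_2) = (odd n)%:R.
Proof. elim: n => // n IH; rewrite mulrS IH /=; by case: (odd n); apply/eqP. Qed.

Lemma bv_addxx n (x : bv n) : x + x = 0.
Proof. by apply/rowP => c; rewrite !mxE F2_addxx. Qed.

Lemma bv_oppE n (x : bv n) : - x = x.
Proof. by apply/rowP => c; rewrite !mxE F2_oppE. Qed.

Lemma sgn_sq n : sgn n * sgn n = 1.
Proof. by rewrite /sgn -exprD addnn -mul2n exprM sqrrN expr1n expr1n. Qed.

Section Eps.
Variable r : nat.
Implicit Types a b : bv (r + r).

Lemma eps_basis_sq i j : eps_basis (r:=r) i j * eps_basis (r:=r) i j = 1.
Proof. rewrite /eps_basis; case: eqP => _; first exact: sgn_sq.
case: ifP => _; [exact: mulr1 | exact: sgn_sq]. Qed.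

Lemma eps_addl a a' b : eps (a + a') b = eps a b * eps a' b.
Proof.
rewrite /eps -big_split; apply: eq_bigr => i _; rewrite -big_split.
apply: eq_bigr => j _; rewrite linearD /=.
case: (F2_cases (coord (Defs.vbasis r) i a)) => ->;
case: (F2_cases (coord (Defs.vbasis r) i a')) => ->;
case: (F2_cases (coord (Defs.vbasis r) j b)) => -> //=; rewrite ?mulr1 ?mul1r //.
by rewrite eps_basis_sq.
Qed.

Lemma eps_addr a b b' : eps a (b + b') = eps a b * eps a b'.
Proof.
rewrite /eps -big_split; apply: eq_bigr => i _; rewrite -big_split.
apply: eq_bigr => j _; rewrite linearD /=.
case: (F2_cases (coord (Defs.vbasis r) j b)) => ->;
case: (F2_cases (coord (Defs.vbasis r) j b')) => ->;
case: (F2_cases (coord (Defs.vbasis r) i a)) => -> //=; rewrite ?mulr1 ?mul1r //.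
by rewrite eps_basis_sq.
Qed.

End Eps.

Section Free.
Variable r : nat.

Lemma vbasis_nth (j : 'I_((r + r).-1)) : (Defs.vbasis r)`_j = vbasis_fun r j.
Proof. by rewrite /Defs.vbasis /= nth_mktuple. Qed.

Lemma vfun_r (j : nat) (i : 'I_r) :
  vbasis_fun r j 0 (rshift r i) = if (j < r)%N then ((i : nat) == j)%:R else 0.
Proof.
rewrite /vbasis_fun; case: ifP => _.
  by rewrite /Delta row_mxEr /eunit mxE.
by rewrite /etil opp_row_mx add_row_mx row_mxEr subr0 mxE.
Qed.

Lemma vfun_l (j : nat) (l : 'I_r) : (r <= j)%N ->
  vbasis_fun r j 0 (lshift r l) = ((l : nat) == (j - r)%N)%:R - ((l : nat) == (j - r)%N.+1)%:R.
Proof.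
rewrite /vbasis_fun leqNgt => /negPf ->.
by rewrite /etil opp_row_mx add_row_mx row_mxEl !mxE.
Qed.

Lemma sum_pref (m a : nat) : (a < r)%N ->
  \sum_(l < r) (if (l <= m)%N then (((l : nat) == a)%:R : 'F_2) else 0) = (a <= m)%:R.
Proof.
move=> ar; rewrite (bigD1 (Ordinal ar)) //= eqxx big1 ?addr0.
  by case: ifP.
move=> l /eqP nl; case: ifP => // _; case: eqP => // E; case: nl; exact: val_inj.
Qed.

Lemma vbasis_free : free (Defs.vbasis r).
Proof.
apply/freeP => k Hk.
have Hc c : \sum_(j < (r + r).-1) k j * vbasis_fun r j 0 c = 0.
  move/(congr1 (fun x : bv (r + r) => x 0 c)): Hk; rewrite summxE mxE => H; rewrite -[RHS]H.
  by apply: eq_bigr => j _; rewrite mxE vbasis_nth.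
have Klo (j : 'I_((r + r).-1)) : (j < r)%N -> k j = 0.
  move=> jr; move: (Hc (rshift r (Ordinal jr))).
  under eq_bigr => j' _ do rewrite vfun_r /=.
  rewrite (bigD1 j) //= jr eqxx mulr1 big1 ?addr0 // => j' /eqP nj.
  case: ifP => _; last by rewrite mulr0.
  by case: eqP => [E|]; [case: nj; apply: val_inj | rewrite mulr0].
move=> i; case: (ltnP i r) => [|ri]; first exact: Klo.
have hm : ((i - r).+1 < r)%N.
  have := ltn_ord i; move: ri; clear; lia.
set m := (i - r)%N.
have H0 : \sum_(l < r) \sum_(j < (r + r).-1)
    k j * (if (l <= m)%N then vbasis_fun r j 0 (lshift r l) else 0) = 0.
  apply: big1 => l _; case: (l <= m)%N; first exact: Hc.
  by apply: big1 => j _; rewrite mulr0.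
have Hj (j : 'I_((r + r).-1)) : \sum_(l < r)
    k j * (if (l <= m)%N then vbasis_fun r j 0 (lshift r l) else 0)
    = if (j < r)%N then 0 else k j * (((j - r)%N == m)%:R).
  case: ifP => jr; first by apply: big1 => l _; rewrite Klo // mul0r.
  rewrite -mulr_sumr; congr (_ * _).
  have rj : (r <= j)%N by rewrite leqNgt jr.
  have ha : ((j - r).+1 < r)%N by have := ltn_ord j; move: rj; clear; lia.
  rewrite (eq_bigr (fun l : 'I_r => (if (l <= m)%N then ((l : nat) == (j - r)%N)%:R else 0)
     - (if (l <= m)%N then ((l : nat) == (j - r)%N.+1)%:R else (0 : 'F_2)))); last first.
    by move=> l _; rewrite vfun_l //; case: ifP; rewrite ?subr0.
  rewrite sumrB !sum_pref //; last exact: ltnW.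
  by case: (ltngtP (j - r) m) => H; rewrite ?subrr ?subr0.
have Hrest : \sum_(j < (r + r).-1 | j != i)
    (if (j < r)%N then 0 else k j * (((j - r)%N == m)%:R)) = 0.
  apply: big1 => j /eqP nj; case: ifP => // jr; case: eqP => [E|]; last by rewrite mulr0.
  case: nj; apply: val_inj. move/negbT: jr; rewrite -leqNgt => jr. move: E; rewrite /m. move/eqP => E; change ((j : nat) = i); lia.
rewrite exchange_big /= (eq_bigr _ (fun j _ => Hj j)) (bigD1 i) //= Hrest in H0.
by move: H0; rewrite ltnNge ri /= eqxx mulr1 addr0.
Qed.

Lemma r_le : (r <= (r + r).-1)%N.
Proof. lia. Qed.

Definition hat (h : bv r) (j : nat) : 'F_2 :=
  if insub j is Some l then h 0 l else 0.
Lemma hat_val (h : bv r) (l : 'I_r) : hat h l = h 0 l.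
Proof. by rewrite /hat valK. Qed.

Lemma Delta_sum (h : bv r) : Delta h =
  \sum_(j < (r + r).-1) (if (j < r)%N then hat h j else 0) *: (Defs.vbasis r)`_j.
Proof.
apply/rowP => c; rewrite summxE.
under eq_bigr => j _ do rewrite vbasis_nth mxE (fun_if (fun x => x * _)) mul0r.
rewrite -big_mkcond /=.
rewrite -(big_ord_widen _ (fun j => hat h j * vbasis_fun r j 0 c) r_le).
rewrite -(splitK c); case: (split c) => l /=.
  rewrite /Delta row_mxEl (bigD1 l) //= big1 ?addr0.
    by rewrite /vbasis_fun ltn_ord /Delta row_mxEl /eunit mxE eqxx mulr1 hat_val.
  move=> j /eqP nj; rewrite /vbasis_fun ltn_ord /Delta row_mxEl /eunit mxE.
  by case: eqP => [E|]; [case: nj; apply: val_inj | rewrite mulr0].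
rewrite /Delta row_mxEr (bigD1 l) //= big1 ?addr0.
  by rewrite vfun_r ltn_ord eqxx mulr1 hat_val.
move=> j /eqP nj; rewrite vfun_r ltn_ord.
by case: eqP => [E|]; [case: nj; apply: val_inj | rewrite mulr0].
Qed.

Lemma coord_Delta (h : bv r) (i : 'I_((r + r).-1)) :
  coord (Defs.vbasis r) i (Delta h) = if (i < r)%N then hat h i else 0.
Proof. by rewrite [in LHS]Delta_sum coord_sum_free // vbasis_free. Qed.
End Free.

Section Eps2.
Variable r : nat.
Implicit Types a b : bv (r + r).

Lemma eps0l b : eps 0 b = 1.
Proof. by apply: big1 => i _; apply: big1 => j _; rewrite linear0 eqxx. Qed.

Lemma eps0r a : eps a 0 = 1.
Proof. by apply: big1 => i _; apply: big1 => j _; rewrite linear0 eqxx andbF. Qed.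

Lemma eps_sq a b : eps a b * eps a b = 1.
Proof. by rewrite -eps_addl bv_addxx eps0l. Qed.

Lemma wt_Delta (z : bv r) : wt (Delta z) = 0.
Proof. by rewrite /wt /wtl /wtr /Delta row_mxKl row_mxKr subrr. Qed.

Lemma cmul_Delta (x y : bv r) : cmul (Delta x) (Delta y) = Delta (cmul x y).
Proof.
apply/rowP => c; rewrite -(splitK c); case: (split c) => l /=;
by rewrite /cmul /Delta mxE ?(row_mxEl, row_mxEr) mxE.
Qed.

Lemma eps_basis_lo (i j : 'I_((r + r).-1)) : (i < r)%N -> (j < r)%N ->
  eps_basis i j = 1.
Proof.
move=> ir jr; rewrite /eps_basis vbasis_nth vbasis_nth /vbasis_fun ir jr.
case: eqP => _; first by rewrite wt_Delta.
case: ifP => // _; by rewrite cmul_Delta wt_Delta.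
Qed.

Lemma eps_Delta (h h' : bv r) : eps (Delta h) (Delta h') = 1.
Proof.
apply: big1 => i _; apply: big1 => j _.
case: ifP => // /andP[]; rewrite !coord_Delta.
by case: ifP => // ir _; case: ifP => // jr _; apply: eps_basis_lo.
Qed.
End Eps2.

Definition dot n (x y : bv n) : 'F_2 := \sum_k x 0 k * y 0 k.

Lemma card_nz n (x : bv n) : (#|[set k | x 0 k != 0]|%:R : 'F_2) = \sum_k x 0 k.
Proof.
rewrite -sum1dep_card natr_sum big_mkcond /=; apply: eq_bigr => k _.
by case: (F2_cases (x 0 k)) => ->.
Qed.

Section Parity.
Variable r : nat.

Lemma wt_even (c : bv (r + r)) : (2 %| wt c)%Z = (\sum_k c 0 k == 0).
Proof.
rewrite /wt -eqz_mod_dvd !modz_nat !modn2 big_split_ord /=.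
have El : \sum_i c 0 (lshift r i) = (wtl c)%:R.
  by rewrite /wtl card_nz; apply: eq_bigr => k _; rewrite mxE.
have Er : \sum_i c 0 (rshift r i) = (wtr c)%:R.
  by rewrite /wtr card_nz; apply: eq_bigr => k _; rewrite mxE.
rewrite El Er (F2_nat (wtl c)) (F2_nat (wtr c)).
by case: (odd (wtl c)); case: (odd (wtr c)); rewrite /= ?addr0 ?add0r ?F2_addxx ?eqxx ?oner_eq0.
Qed.

Lemma perp_dot (A : {set bv (r + r)}) b : (b \in perp A) = [forall a in A, dot b a == 0].
Proof.
rewrite inE; apply: eq_forallb => a; rewrite wt_even /dot.
by congr (_ ==> (_ == _)); apply: eq_bigr => k _; rewrite mxE.
Qed.
End Parity.

Lemma dotDr n (x y z : bv n) : dot x (y + z) = dot x y + dot x z.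
Proof. by rewrite /dot -big_split; apply: eq_bigr => k _; rewrite mxE mulrDr. Qed.
Lemma dotDl n (x y z : bv n) : dot (x + y) z = dot x z + dot y z.
Proof. by rewrite /dot -big_split; apply: eq_bigr => k _; rewrite mxE mulrDl. Qed.
Lemma dot0r n (x : bv n) : dot x 0 = 0.
Proof. by rewrite /dot big1 // => k _; rewrite mxE mulr0. Qed.

Section CGcard.
Variable r : nat.
Variable G : {vspace bv r}.

Definition Gperp : {set bv r} := [set x | [forall g, (g \in G) ==> (dot x g == 0)]].

Lemma dot_Delta (b : bv (r + r)) (g : bv r) : dot b (Delta g) = dot (lsubmx b + rsubmx b) g.
Proof.
rewrite /dot big_split_ord /= -big_split; apply: eq_bigr => k _.
by rewrite /Delta row_mxEl row_mxEr !mxE mulrDl.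
Qed.

Lemma CG_in b : (b \in CG G) = (lsubmx b + rsubmx b \in Gperp).
Proof.
rewrite /CG perp_dot inE; apply/forallP/forallP => H g.
  apply/implyP => gG; have := H (Delta g); rewrite dot_Delta => /implyP; apply.
  by apply/imsetP; exists g; rewrite ?inE.
apply/implyP => /imsetP [g' ]; rewrite inE => gG ->; rewrite dot_Delta.
by have /implyP := H g'; apply.
Qed.

Definition sg (y : 'F_2) : int := if y == 0 then 1 else -1.
Lemma sgD y z : sg (y + z) = sg y * sg z.
Proof.
rewrite /sg; case: (F2_cases y) => ->; case: (F2_cases z) => ->;
by rewrite ?addr0 ?add0r ?F2_addxx ?eqxx ?oner_eq0 ?mulr1 ?mul1r ?mulrNN.
Qed.

Lemma sum_flip (T : finType) (P : pred T) (F : T -> int) (h : T -> T) :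
  injective h -> (forall x, P (h x) = P x) -> (forall x, F (h x) = - F x) ->
  \sum_(x | P x) F x = 0.
Proof.
move=> hi HP HF.
have E : \sum_(x | P x) F x = \sum_(x | P x) - F x.
  rewrite (reindex_inj hi); apply: eq_big => x; [exact: HP | move=> _; exact: HF].
move: E; rewrite sumrN => /eqP; rewrite -subr_eq0 opprK -mulr2n mulrn_eq0 /=.
by move/eqP.
Qed.

Lemma sg1 : sg 1 = -1.
Proof. by rewrite /sg oner_eq0. Qed.

Lemma F2_nz (y : 'F_2) : y != 0 -> y = 1.
Proof. by case: (F2_cases y) => -> //; rewrite eqxx. Qed.

Lemma sumG x : \sum_(g in G) sg (dot x g) = if x \in Gperp then (#|G|)%:Z else 0.
Proof.
case: ifP => Hx.
  rewrite (eq_bigr (fun _ => 1)) ?sumr_const ?natz //.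
  move=> g gG; move: Hx; rewrite inE => /forallP /(_ g) /implyP /(_ gG) /eqP ->.
  by rewrite /sg eqxx.
move/negbT: Hx; rewrite inE => /forallPn [g0]; rewrite negb_imply => /andP [g0G nz].
apply: (@sum_flip _ _ _ (fun g => g + g0)); first exact: addIr.
  by move=> g; rewrite /= rpredDr.
by move=> g; rewrite dotDr sgD (F2_nz nz) sg1 mulrN1.
Qed.

Lemma sumX (g : bv r) : \sum_x sg (dot x g) = if g == 0 then (2 ^ r)%N%:Z else 0.
Proof.
case: eqP => [->|/eqP gnz].
  rewrite (eq_bigr (fun _ => 1)); last by move=> x _; rewrite dot0r /sg eqxx.
  by rewrite sumr_const card_mx card_Fp // mul1n natz.
have [c Hc] : exists c, g 0 c != 0.
  apply/existsP; apply: contraR gnz => /existsPn H; apply/eqP/rowP => c.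
  by rewrite mxE; apply/eqP/negPn/H.
pose x0 : bv r := \row_k ((k == c)%:R).
have Hx0 : dot x0 g = 1.
  rewrite /dot (bigD1 c) //= big1 ?addr0 ?mxE ?eqxx ?mul1r ?(F2_nz Hc) //.
  by move=> k /negPf kc; rewrite mxE kc mul0r.
apply: (@sum_flip _ _ _ (fun x => x + x0)); first exact: addIr.
  by [].
by move=> x; rewrite dotDl sgD Hx0 sg1 mulrN1.
Qed.

Lemma card_perp : (#|Gperp| * #|G|)%N = (2 ^ r)%N.
Proof.
have E : \sum_(x : bv r) \sum_(g in G) sg (dot x g) = \sum_(g in G) \sum_(x : bv r) sg (dot x g).
  by rewrite exchange_big.
rewrite (eq_bigr _ (fun x _ => sumG x)) (eq_bigr _ (fun g _ => sumX g)) in E.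
move: E; rewrite -big_mkcond sumr_const (bigD1 0) ?mem0v //= eqxx big1 ?addr0.
  by rewrite -[X in X *+ _]natz -mulrnA natz mulnC => -[].
by move=> g /andP [_ /negPf ->].
Qed.

Lemma card_CG0 : #|CG G| = (#|Gperp| * 2 ^ r)%N.
Proof.
pose f (b : bv (r + r)) := (lsubmx b + rsubmx b, rsubmx b).
have finj : injective f.
  move=> b1 b2 [] E1 E2; rewrite E2 in E1; move/addIr: E1 => E1.
  by rewrite -(hsubmxK b1) -(hsubmxK b2) E1 E2.
rewrite -(card_imset _ finj).
have -> : f @: CG G = setX Gperp setT.
  apply/setP => -[u v]; rewrite in_setX in_setT andbT; apply/imsetP/idP.
    by move=> [b bC [-> _]]; rewrite -CG_in.
  move=> uP; exists (row_mx (u + v) v); last first.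
    by rewrite /f row_mxKl row_mxKr -addrA bv_addxx addr0.
  by rewrite CG_in row_mxKl row_mxKr -addrA bv_addxx addr0.
by rewrite cardsX cardsT card_mx card_Fp // mul1n.
Qed.

Lemma card_CG : (#|CG G| * 2 ^ \dim G)%N = (2 ^ (r + r))%N.
Proof.
have cG : #|G| = (2 ^ \dim G)%N by rewrite card_vspace card_Fp.
by rewrite card_CG0 -cG -mulnA (mulnC (2 ^ r)%N) mulnA card_perp -expnD.
Qed.
End CGcard.

Section Alg.
Variable r : nat.
Local Notation FV := (FV r).
Local Notation V := (bv (r + r)).

Lemma scaleFV (k : algC) (f : FV) x : (k *: f) x = k * f x.
Proof. by rewrite ffunE. Qed.

Lemma addFV (f g : FV) x : (f + g) x = f x + g x.
Proof. by rewrite ffunE. Qed.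

Lemma ebasE (a x : V) : ebas a x = (x == a)%:R.
Proof. by rewrite ffunE. Qed.

Lemma dim_ebas (S : {set V}) : \dim <<[seq ebas a | a <- enum S]>> = #|S|.
Proof.
set X := [seq ebas a | a <- enum S].
have Hfree : free (in_tuple X).
  apply/freeP => k Hk i.
  have ui : (i < #|S|)%N by rewrite cardE -(size_map (@ebas r)); exact: ltn_ord.
  move/(congr1 (fun f : FV => f (enum S)`_i)): Hk.
  rewrite sum_ffunE ffunE (bigD1 i) //= big1 ?addr0.
    by rewrite scaleFV (nth_map 0) -?cardE // ebasE eqxx mulr1.
  move=> j nji; have uj : (j < #|S|)%N by rewrite cardE -(size_map (@ebas r)); exact: ltn_ord.
  rewrite scaleFV (nth_map 0) -?cardE // ebasE.
  by rewrite nth_uniq ?enum_uniq -?cardE // val_eqE eq_sym (negPf nji) mulr0.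
have Hf : free X := Hfree. by move/eqP: Hf; rewrite size_map -cardE.
Qed.

Lemma tmul_ebas (a b : V) : tmul (ebas a) (ebas b) = eps a b *: ebas (a + b).
Proof.
apply/ffunP => c; rewrite ffunE scaleFV ebasE.
rewrite (bigD1 a) //= (bigD1 b) //= !ebasE !eqxx !mulr1 big1 ?addr0.
  rewrite big1 ?addr0; first by rewrite eq_sym; case: eqP; rewrite ?mulr1 ?mulr0.
  move=> x nxa; apply: big1 => y _; rewrite !ebasE (negPf nxa) mulr0 mul0r.
  by case: ifP.
by move=> y nyb; rewrite ebasE (negPf nyb) mulr0; case: ifP.
Qed.

Lemma span_lin (s : seq FV) (psi : FV -> algC) :
  (forall k f g, psi (k *: f + g) = k * psi f + psi g) ->
  {in s, forall x, psi x = 0} -> forall f, f \in <<s>>%VS -> psi f = 0.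
Proof.
move=> lin H0 f fs; rewrite (coord_span (X := in_tuple s) fs).
have p0 : psi 0 = 0.
  have := lin 1 0 0; rewrite scaler0 addr0 mul1r => E.
  by apply: (addrI (psi 0)); rewrite addr0 -E.
apply: (big_ind (fun v => psi v = 0)) => //.
  by move=> x y Hx Hy; rewrite -[x]scale1r lin Hx Hy mulr0 addr0.
move=> i _; rewrite -[_ *: _]addr0 lin p0 addr0 H0 ?mulr0 //.
exact: mem_nth.
Qed.
End Alg.

Section Struct.
Variable r : nat.
Variable G : {vspace bv r}.
Variable g : bv r.

Lemma Delta_inj : injective (@Delta r).
Proof. by move=> x y E; rewrite -(row_mxKl x x) -(row_mxKl y y); congr lsubmx. Qed.
Lemma DeltaD (x y : bv r) : Delta (x + y) = Delta x + Delta y.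
Proof. by rewrite /Delta add_row_mx. Qed.
Lemma Delta0 : Delta (0 : bv r) = 0.
Proof. by rewrite /Delta row_mx0. Qed.
Lemma cmulD (x y : bv r) : cmul g (x + y) = cmul g x + cmul g y.
Proof. by apply/rowP => k; rewrite !mxE mulrDr. Qed.
Lemma cmul0 : cmul g 0 = 0.
Proof. by apply/rowP => k; rewrite !mxE mulr0. Qed.
Lemma cmul_idem (x : bv r) : cmul g (cmul g x) = cmul g x.
Proof. apply/rowP => k; rewrite !mxE; case: (F2_cases (g 0 k)) => ->; by rewrite ?mul0r ?mul1r. Qed.
Lemma rsubD (a b : bv (r + r)) : rsubmx (a + b) = rsubmx a + rsubmx b.
Proof. by apply/rowP => k; rewrite !mxE. Qed.
Lemma lsubD (a b : bv (r + r)) : lsubmx (a + b) = lsubmx a + lsubmx b.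
Proof. by apply/rowP => k; rewrite !mxE. Qed.

Lemma dot0l n (x : bv n) : dot 0 x = 0.
Proof. by rewrite /dot big1 // => k _; rewrite mxE mul0r. Qed.

Lemma Delta_CG (x : bv r) : Delta x \in CG G.
Proof.
rewrite CG_in /Delta row_mxKl row_mxKr bv_addxx inE.
by apply/forallP => y; apply/implyP => _; rewrite dot0l.
Qed.

Lemma CG_addDelta (a : bv (r + r)) (x : bv r) : (a + Delta x \in CG G) = (a \in CG G).
Proof.
rewrite !CG_in lsubD rsubD /Delta row_mxKl row_mxKr.
by rewrite addrACA bv_addxx addr0.
Qed.

Definition Hs : {set bv r} := [set h | cmul g h == h].
Definition Ts : {set bv (r + r)} := [set a in CG G | cmul g (rsubmx a) == 0].

Lemma Ts_in a : (a \in Ts) = (a \in CG G) && (cmul g (rsubmx a) == 0).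
Proof. by rewrite /Ts in_set. Qed.
Lemma Hs_in h : (h \in Hs) = (cmul g h == h).
Proof. by rewrite /Hs in_set. Qed.

Lemma Deltad_eq : Deltad (Delta g) = (@Delta r) @: Hs.
Proof.
apply/setP => c; rewrite inE; apply/andP/imsetP.
  move=> [/eqP E /imsetP [h _ ch]]; exists h => //.
  by rewrite inE; apply/eqP/Delta_inj; rewrite -cmul_Delta -ch.
by move=> [h]; rewrite inE => /eqP E ->; rewrite cmul_Delta E; split => //; apply/imsetP; exists h.
Qed.

Lemma card_TH : (#|Ts| * #|Hs|)%N = #|CG G|.
Proof.
pose k (a : bv (r + r)) := cmul g (rsubmx a).
pose phi a := (a + Delta (k a), k a).
have phinj : injective phi.
  by move=> a1 a2 [] E1 E2; rewrite E2 in E1; exact: addIr E1.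
rewrite -cardsX -(card_imset _ phinj); apply/esym/eq_card => -[t h].
rewrite in_setX Ts_in Hs_in; apply/imsetP/andP.
  move=> [a aC [-> ->]]; rewrite /k CG_addDelta aC rsubD /Delta row_mxKr.
  by rewrite cmulD cmul_idem bv_addxx !eqxx.
move=> [/andP [tC /eqP t0] /eqP hH]; exists (t + Delta h).
  by rewrite CG_addDelta.
have kE : k (t + Delta h) = h by rewrite /k rsubD /Delta row_mxKr cmulD t0 add0r hH.
by rewrite /phi kE -addrA bv_addxx addr0.
Qed.

Lemma card_H : #|Hs| = expn 2 #|[set i | g 0 i != 0]|.
Proof.
pose psi (h : bv r) := [set i | h 0 i != 0].
have psinj : injective psi.
  move=> h1 h2 E; apply/rowP => i; move/setP/(_ i): E; rewrite !inE.
  by case: (F2_cases (h1 0 i)) => ->; case: (F2_cases (h2 0 i)) => ->; rewrite ?eqxx ?oner_eq0.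
rewrite -card_powerset -(card_imset _ psinj); apply: eq_card => S.
rewrite inE; apply/imsetP/idP.
  move=> [h]; rewrite inE => /eqP hH ->; apply/subsetP => i; rewrite !inE.
  rewrite -hH mxE; apply: contraNneq => ->; by rewrite mul0r.
move=> Ssub; exists (\row_i ((i \in S)%:R)).
  rewrite inE; apply/eqP/rowP => i; rewrite !mxE.
  case iS: (i \in S); last by rewrite mulr0.
  move/subsetP: Ssub => /(_ i iS); rewrite inE => /F2_nz ->; by rewrite mulr1.
apply/setP => i; rewrite !inE mxE; by case: (i \in S); rewrite ?eqxx ?oner_eq0.
Qed.
End Struct.

Lemma subFV r (f1 f2 : FV r) x : (f1 - f2) x = f1 x - f2 x.
Proof. by rewrite !ffunE. Qed.

Section Main.
Variable r : nat.
Variable G : {vspace bv r}.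
Variable g : bv r.

Lemma Hs_addr h h' : h' \in Hs g -> (h + h' \in Hs g) = (h \in Hs g).
Proof. by rewrite !Hs_in cmulD => /eqP ->; rewrite (inj_eq (addIr _)). Qed.

Lemma gen_form x :
  x \in [seq tmul (ebas a) (ebas c) - ebas a | a <- enum (CG G), c <- enum (Deltad (Delta g))] ->
  exists a h, [/\ a \in CG G, h \in Hs g & x = eps a (Delta h) *: ebas (a + Delta h) - ebas a].
Proof.
move/allpairsP => [[a c] [/= aC cD ->]].
move: cD; rewrite mem_enum Deltad_eq => /imsetP [h hH ->].
by exists a, h; split => //; [rewrite -mem_enum | rewrite tmul_ebas].
Qed.

Lemma dimA_eq : dimA G (Delta g) = #|Ts G g|.
Proof.
set R := relsp G (Delta g).
set E := <<[seq ebas t | t <- enum (Ts G g)]>>%VS.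
set C := CGalg G.
have inC a : a \in CG G -> ebas a \in C.
  by move=> aC; apply: memv_span; apply: map_f; rewrite mem_enum.
have RC : (R <= C)%VS.
  apply/span_subvP => x /gen_form [a [h [aC hH ->]]].
  by rewrite rpredB ?rpredZ ?inC // CG_addDelta.
have EC : (E <= C)%VS.
  apply/span_subvP => x /mapP [t tT ->]; apply: inC.
  by move: tT; rewrite mem_enum Ts_in => /andP [].
have CRE : (C <= R + E)%VS.
  apply/span_subvP => x /mapP [b bC ->]; rewrite mem_enum in bC.
  set h := cmul g (rsubmx b); set t := b + Delta h.
  have tT : t \in Ts G g.
    by rewrite Ts_in CG_addDelta bC rsubD /Delta row_mxKr cmulD cmul_idem bv_addxx eqxx.
  have hH : h \in Hs g by rewrite Hs_in cmul_idem.
  have btE : t + Delta h = b by rewrite /t -addrA bv_addxx addr0.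
  set gen := tmul (ebas t) (ebas (Delta h)) - ebas t.
  have genR : gen \in R.
    apply: memv_span; apply: allpairs_f; first by move: tT; rewrite mem_enum Ts_in => /andP [].

    by rewrite mem_enum Deltad_eq; apply: imset_f.
  have -> : ebas b = eps t (Delta h) *: (gen + ebas t).
    by rewrite /gen tmul_ebas btE subrK scalerA eps_sq scale1r.
  apply: rpredZ; apply: memv_add => //; apply: memv_span; apply: map_f.
  by rewrite mem_enum.
have RE0 : (R :&: E = 0)%VS.
  apply/eqP; rewrite -subv0; apply/subvP => f; rewrite memv_cap => /andP [fR fE].
  rewrite memv0; apply/eqP/ffunP => b; rewrite ffunE.
  have Hoff c : c \notin Ts G g -> f c = 0.
    move=> cT; apply: (span_lin (psi := fun f : FV r => f c)) fE.
      by move=> k f1 f2; rewrite addFV scaleFV.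
    move=> x /mapP [t tT ->]; rewrite mem_enum in tT; rewrite ebasE.
    by case: eqP => // E0; rewrite E0 tT in cT.
  case bT: (b \in Ts G g); last by rewrite Hoff ?bT.
  pose psi (f : FV r) := \sum_(h in Hs g) eps b (Delta h) * f (b + Delta h).
  have psi0 : psi f = 0.
    apply: (span_lin (psi := psi)) fR.
      move=> k f1 f2; rewrite /psi mulr_sumr -big_split; apply: eq_bigr => h _.
      by rewrite addFV scaleFV mulrDr mulrCA.
    move=> x /gen_form [a [h' [aC hH' ->]]]; rewrite /psi.
    under eq_bigr do rewrite subFV scaleFV !ebasE mulrBr.
    rewrite sumrB; apply/eqP; rewrite subr_eq0; apply/eqP.
    rewrite (reindex_inj (addIr h')) /=; apply: eq_big => h; first exact: Hs_addr.
    move=> _; rewrite DeltaD eps_addr addrA (inj_eq (addIr _)).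
    case: eqP => [<-|_]; last by rewrite /= !mulr0.
    by rewrite eps_addl eps_Delta !mulr1 -mulrA eps_sq mulr1.
  have psib : psi f = f b.
    rewrite /psi (bigD1 0) /=; last by rewrite Hs_in cmul0.
    rewrite Delta0 eps0r addr0 mul1r big1 ?addr0 // => h /andP [hH hn0].
    rewrite Hoff ?mulr0 // Ts_in negb_and; apply/orP; right.
    move: bT; rewrite Ts_in => /andP [_ /eqP b0].
    by rewrite rsubD /Delta row_mxKr cmulD b0 add0r; move: hH; rewrite Hs_in => /eqP ->.
  by rewrite -psib psi0.
have CE : C = (R + E)%VS by apply/eqP; rewrite eqEsubv CRE subv_add RC EC.
rewrite /dimA -/R -/C CE dimv_disjoint_sum // addKn.
exact: dim_ebas.
Qed.
End Main.

Lemma card_CG_exp r (G : {vspace bv r}) : #|CG G| = (2 ^ (2 * r - \dim G))%N.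
Proof.
have H := card_CG G.
have C0 : (0 < #|CG G|)%N.
  by apply/card_gt0P; exists 0; rewrite -(Delta0 r) Delta_CG.
have le : (\dim G <= r + r)%N.
  rewrite -(leq_exp2l _ _ (isT : (1 < 2)%N)) -H.
  by rewrite leq_pmull.
apply/eqP; rewrite -(eqn_pmul2r (expn_gt0 2 (\dim G))) H -expnD mul2n -addnn subnK //.
Qed.

Lemma wt_le r (g : bv r) : leq (#|[set i | g 0 i != 0]|).+1 r.+1.
Proof. by rewrite ltnS; apply: leq_trans (max_card _) _; rewrite card_ord. Qed.

Unset Implicit Arguments.

Theorem mainTheorem16 (r : nat) (G : {vspace 'rV['F_2]_r}) :
  (0 < r)%N -> const_mx 1 \in G ->
  (dimS G)%:R = (2 ^ (2 * r - \dim G))%N%:R * PG_half G :> rat.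
Proof.
move=> _ _.
set N := (2 ^ (2 * r - \dim G))%N.
set w := fun g : bv r => #|[set i | g 0 i != 0]|.
have Dinj : {in [pred g : bv r | g \in G] &, injective (@Delta r)}.
  by move=> x y _ _; apply: Delta_inj.
rewrite /dimS /DG big_imset /=; last by move=> x y _ _; apply: Delta_inj.
have HT g : (#|Ts G g|%:R : rat) = N%:R / (2%:R ^+ w g).
  have := card_TH G g; rewrite card_H card_CG_exp -/N => <-.
  rewrite natrM natrX mulfK // expf_neq0 //.
rewrite natr_sum (eq_bigr _ (fun g _ => congr1 (fun n : nat => n%:R : rat) (dimA_eq G g))).
rewrite (eq_bigr _ (fun g _ => HT g)) -mulr_sumr; congr (_ * _).
rewrite /PG_half.
have E1 : \sum_(g in [set g : bv r | g \in G]) (2%:R ^+ w g)^-1 =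
   \sum_(g in [set g : bv r | g \in G]) \sum_(k < r.+1)
      (if w g == k then (2%:R ^+ k)^-1 else 0 : rat).
  apply: eq_bigr => g _; rewrite (bigD1 (Ordinal (wt_le g))) //= eqxx big1 ?addr0 //.
  by move=> k /negPf nk; case: eqP => // E; move: nk; rewrite -val_eqE /= -E /w eqxx.
rewrite E1 exchange_big /=; apply: eq_bigr => k _.
rewrite /Nk [RHS]mulr_natl -sumr_const big_mkcond [RHS]big_mkcond /=.
apply: eq_bigr => g _; rewrite !inE.
by case: (g \in G); case: eqP.
Qed.
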